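(* Let $\delta \geq \gamma > 0$ and let $G$ be a graph on $t$ vertices whose edges are coloured with $r$ colours, with minimum degree $\delta(G) \geq \delta t$. Then $G$ contains a spanning subgraph $R$ with $\delta(R) \geq (\delta - \gamma) t$ which is the union of at most $r^2/\gamma$ monochromatic components of $G$.
   Context: A monochromatic component of an edge-coloured graph $G$ is a connected component of the subgraph of $G$ consisting of all edges of a single colour (and their endpoints). $\delta(\cdot)$ denotes minimum degree. *)

(* Defs.v *)
From mathcomp Require Import all_boot all_order all_algebra.
Set Implicit Arguments. Unset Strict Implicit. Unset Printing Implicit Defensive.

(* A simple graph on a finite type T: a symmetric irreflexive relation e.
   An r-edge-colouring: col : T -> T -> 'I_r, symmetric on edges
   (only its values on edges matter). *)

Definition simple_graph (T : finType) (e : rel T) : Prop :=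
  irreflexive e /\ symmetric e.

Definition edge_colouring (T : finType) (r : nat) (e : rel T)
    (col : T -> T -> 'I_r) : Prop :=
  forall x y, e x y -> col x y = col y x.

Definition colour_rel (T : finType) (r : nat) (e : rel T)
    (col : T -> T -> 'I_r) (i : 'I_r) : rel T :=
  fun x y => e x y && (col x y == i).

(* C is (the vertex set of) a monochromatic component of colour i:
   the connected component of some vertex v in the graph formed by the
   edges of colour i and their endpoints (so v has a colour-i edge).
   Its edge set is all colour-i edges with endpoints in C. *)
Definition mono_component (T : finType) (r : nat) (e : rel T)
    (col : T -> T -> 'I_r) (i : 'I_r) (C : {set T}) : Prop :=
  exists v : T, (exists u, colour_rel e col i v u) /\
    C = [set u | connect (colour_rel e col i) v u].

Definition union_rel (T : finType) (r : nat) (e : rel T)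
    (col : T -> T -> 'I_r) (M : {set 'I_r * {set T}}) : rel T :=
  fun x y => [exists p in M, colour_rel e col p.1 x y && (x \in p.2) && (y \in p.2)].

Definition degree (T : finType) (g : rel T) (x : T) : nat := #|[set y | g x y]|.

(* Main.v *)
Require Import Defs.
From mathcomp Require Import all_boot all_order all_algebra.
From mathcomp Require Import lra.
Import Order.TTheory GRing.Theory Num.Theory.
Local Open Scope ring_scope.

Theorem lemma6p10 (R : realFieldType) (delta gamma : R)
    (T : finType) (e : rel T) (r : nat) (col : T -> T -> 'I_r) :
  simple_graph e ->
  edge_colouring e col ->
  0 < gamma -> gamma <= delta ->
  (forall x : T, delta * #|T|%:R <= (degree e x)%:R) ->
  exists M : {set 'I_r * {set T}},
    (forall p, p \in M -> mono_component e col p.1 p.2) /\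
    #|M|%:R <= (r ^ 2)%:R / gamma /\
    (forall x : T, (delta - gamma) * #|T|%:R <= (degree (union_rel e col M) x)%:R).
Proof.
move=> [irr sym] ecol g0 gd hdeg.
set t := #|T|.
pose C i v := [set u | connect (colour_rel e col i) v u].
have csym i : connect_sym (colour_rel e col i).
  apply: sym_connect_sym => x y; rewrite /colour_rel sym.
  case eyx: (e y x) => //=; by rewrite (ecol _ _ eyx).
have Csame i u v : u \in C i v -> C i u = C i v.
  rewrite inE => cvu; apply/setP => w; rewrite !inE.
  by rewrite (same_connect (csym i) cvu).
pose large (S : {set T}) := gamma * t%:R <= r%:R * #|S|%:R.
pose M := [set p : 'I_r * {set T} | [exists v, [exists u, colour_rel e col p.1 v u] && (p.2 == C p.1 v)] && large p.2].
have t0 : 0 <= t%:R :> R by rewrite ler0n.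
exists M; split; [|split].
- move=> p; rewrite inE => /andP[/existsP[v /andP[/existsP[u hu] /eqP ->]] _].
  by exists v; split; [exists u|].
- pose Mi (i : 'I_r) := [set p in M | p.1 == i].
  have hM : #|M| = (\sum_(i < r) #|Mi i|)%N.
    rewrite -sum1_card (partition_big (fun p : 'I_r * {set T} => p.1) predT) //=.
    by apply: eq_bigr => i _; rewrite sum1dep_card; apply: eq_card => p; rewrite !inE.
  have [tz|tpos] := eqVneq t 0%N.
    have -> : M = set0.
      apply/setP => p; rewrite !inE; apply/negbTE/negP => /andP[/existsP[v _] _].
      have : (0 < t)%N by apply/card_gt0P; exists v.
      by rewrite tz.
    by rewrite cards0 divr_ge0 ?ler0n // ltW.
  have tpos' : 0 < t%:R :> R by rewrite ltr0n lt0n.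
  have hsum i : (\sum_(p in Mi i) #|p.2| <= t)%N.
    have -> : (\sum_(p in Mi i) #|p.2| =
               \sum_(p in Mi i) \sum_(u : T) (if u \in p.2 then 1 else 0))%N.
      by apply: eq_bigr => p _; rewrite -sum1_card big_mkcond.
    have -> : t = (\sum_(u : T) 1)%N by rewrite /t -sum1_card.
    rewrite exchange_big /=.
    apply: leq_sum => u _.
    rewrite -big_mkcondr sum1dep_card.
    rewrite -(cards1 (i, C i u)); apply: subset_leq_card; apply/subsetP => p.
    rewrite !inE => /andP[/andP[/andP[/existsP[v /andP[_ /eqP hp2]] _] /eqP hp1] hu].
    rewrite hp2 hp1 in hu; rewrite hp1 in hp2.
    rewrite (Csame _ _ _ hu) -hp2 -hp1; by case: p {hp1 hp2 hu}.
  have hMi i : (#|Mi i|%:R : R) <= r%:R / gamma.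
    rewrite ler_pdivlMr // -(ler_pM2r tpos') -mulrA.
    rewrite mulr_natl -sumr_const.
    apply: (le_trans (y := \sum_(p in Mi i) r%:R * (#|p.2|%:R : R))).
      apply: ler_sum => p; rewrite !inE => /andP[/andP[_ hl] _]; exact: hl.
    by rewrite -mulr_sumr -natr_sum ler_wpM2l ?ler0n // ler_nat.
  rewrite hM natr_sum.
  apply: (le_trans (ler_sum _ (fun i _ => hMi i))).
  rewrite big_const_ord iter_addr_0 natrX expr2 -mulrA mulr_natl.
  by rewrite mulr_natl.
- move=> x.
  have r0 : (0 < r)%N by case: (col x x) => k hk; apply: leq_ltn_trans hk.
  pose A := [set y | e x y].
  pose B := [set y | e x y && large (C (col x y) x)].
  have hB : (#|B| <= degree (union_rel e col M) x)%N.
      apply: subset_leq_card; apply/subsetP => y; rewrite !inE => /andP[exy hl].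
    rewrite /union_rel.
    apply/existsP; exists (col x y, C (col x y) x); rewrite /= !inE hl connect0 !andbT.
    have cxy : colour_rel e col (col x y) x y by rewrite /colour_rel exy eqxx.
    rewrite cxy connect1 // andbT.
    rewrite andbT; apply/existsP; exists x; rewrite /= eqxx andbT; apply/existsP; by exists y.
  have hAB : #|A| = (#|B| + #|A :\: B|)%N.
    have AB : A :&: B = B by apply/setIidPr/subsetP => y; rewrite !inE => /andP[].
    by rewrite -(cardsID B A) AB.
  have hd : (#|A :\: B|%:R : R) <= gamma * t%:R.
    have -> : #|A :\: B| = (\sum_(i < r) #|[set y in A :\: B | col x y == i]|)%N.
      rewrite -sum1_card (partition_big (col x) predT) //=.
      by apply: eq_bigr => i _; rewrite -sum1dep_card; apply: eq_bigl => y; rewrite inE.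
    have hi : forall i : 'I_r, r%:R * (#|[set y in A :\: B | col x y == i]|%:R : R) <= gamma * t%:R.
      move=> i.
      have hsub : (#|[set y in A :\: B | col x y == i]| <= #|C i x|)%N.
        apply: subset_leq_card; apply/subsetP => y; rewrite !inE => /andP[/andP[_ exy] /eqP ci].
        by apply: connect1; rewrite /colour_rel exy ci eqxx.
      have [n0|] := eqVneq #|[set y in A :\: B | col x y == i]| 0%N.
        by rewrite n0 mulr0 mulr_ge0 // ltW.
      rewrite -lt0n => /card_gt0P[y]; rewrite !inE => /andP[/andP[hnl exy] /eqP ci].
      rewrite exy /= ci in hnl.
      apply: (le_trans (y := r%:R * #|C i x|%:R)).
        by apply: ler_wpM2l; rewrite ?ler0n // ler_nat.
      by apply: ltW; rewrite ltNge; exact: hnl.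
    rewrite natr_sum.
    rewrite -(ler_pM2l (_ : 0 < r%:R :> R)) ?ltr0n // mulr_sumr.
    apply: (le_trans (ler_sum _ (fun i _ => hi i))).
    by rewrite sumr_const card_ord mulr_natl.
  have := hdeg x; rewrite /degree -/A hAB natrD.
  have : (#|B|%:R : R) <= (degree (union_rel e col M) x)%:R by rewrite ler_nat.
  rewrite /degree mulrBl.
  move: hd; set a := gamma * _; set b := delta * _; move=> *; lra.
Qed.
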